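(* Let $H$ be a Hintikka tree with induced belief $B$. For all sentences $\varphi, \varphi_1, \varphi_2$ of $L$ and every formula $\psi$ whose only free variable is $x$: (1) $B(\lnot \varphi) = 1 - B(\varphi)$; (2) $B(\varphi_1 \land \varphi_2) \leq \min(B(\varphi_1), B(\varphi_2))$; (3) $\max(B(\varphi_1), B(\varphi_2)) \leq B(\varphi_1 \lor \varphi_2)$; (4) $B((\forall x)\psi) \leq \min_{\delta \in \mathrm{dnf}((\exists x)\lnot\psi)} \{1 - B(\delta)\}$; (5) $\max_{\delta \in \mathrm{dnf}((\exists x)\psi)} \{B(\delta)\} \leq B((\exists x)\psi)$.
   Context: $L$ is a first-order language without equality with finitely many predicate symbols and no function or constant symbols. For $d \in \mathbb{N}$, $\Delta^{(d)}$ is the finite set of Hintikka constituents of depth $d$ with no free variables ($\Delta^{(0)} = \{\top\}$); every sentence $\varphi$ of quantifier depth $d$ is logically equivalent to the disjunction of a set $\mathrm{dnf}(\varphi) \subseteq \Delta^{(d)}$ (its Hintikka distributive normal form of depth $d$); each constituent is itself a sentence. $\mathrm{expand}(1,\delta^{(d)})\subseteq\Delta^{(d+1)}$ denotes the expansions of $\delta^{(d)}$. Refinement tree: on $\Delta = \bigcup_d \Delta^{(d)}$ put an edge from each $\delta^{(d)}$ to each member of $\mathrm{expand}(1,\delta^{(d)})$, keeping a constituent lying in several depth-$d$ expansions as child of only one of them. A Hintikka tree is a function $H: \Delta \to [0,1]$ with $H(\delta^{(0)}) = 1$ and $H(\delta) = \sum_{\delta' \text{ child of } \delta} H(\delta')$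 for all $\delta$. Let $\Psi^\omega$ be the set of infinite root paths in the refinement tree with the topology generated by cylinders $[\delta^{(0)}\cdots\delta^{(d)}]$, and $\beta$ the unique Borel probability measure with $\beta([\delta^{(0)}\cdots\delta^{(d)}]) = H(\delta^{(d)})$. The belief in a sentence $\varphi$ of depth $d$ is $B(\varphi) = \sum_{\delta^{(d)} \in \mathrm{dnf}(\varphi)} \beta([\delta^{(0)} \cdots \delta^{(d)}])$, where $\delta^{(0)}\cdots\delta^{(d)}$ is the root path to $\delta^{(d)}$. *)

(* Defs.v *)
From HB Require Import structures.
From mathcomp Require Import all_boot all_order all_algebra.
From mathcomp Require Import reals.
Set Implicit Arguments. Unset Strict Implicit. Unset Printing Implicit Defensive.
Import Order.TTheory GRing.Theory Num.Theory.

(* The language L: m predicate symbols, symbol i of arity ar i; no     *)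
(* function or constant symbols, no equality.  Variables are nats.     *)

Inductive fform (m : nat) (ar : 'I_m -> nat) : Type :=
  | FTop : fform ar
  | FAtom (i : 'I_m) (args : (ar i).-tuple nat) : fform ar
  | FNeg : fform ar -> fform ar
  | FAnd : fform ar -> fform ar -> fform ar
  | FOr : fform ar -> fform ar -> fform ar
  | FEx (x : nat) : fform ar -> fform ar
  | FAll (x : nat) : fform ar -> fform ar.
Arguments FTop {m ar}.

Fixpoint qdepth m (ar : 'I_m -> nat) (f : fform ar) : nat :=
  match f with
  | FTop | FAtom _ _ => 0
  | FNeg g => qdepth g
  | FAnd g h | FOr g h => maxn (qdepth g) (qdepth h)
  | FEx _ g | FAll _ g => (qdepth g).+1
  end.

Fixpoint fv m (ar : 'I_m -> nat) (f : fform ar) : seq nat :=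
  match f with
  | FTop => [::]
  | FAtom _ args => tval args
  | FNeg g => fv g
  | FAnd g h | FOr g h => fv g ++ fv h
  | FEx x g | FAll x g => [seq y <- fv g | y != x]
  end.

Definition sentence m (ar : 'I_m -> nat) (f : fform ar) : bool := fv f == [::].

(* Hintikka constituents.  Bound variables are numbered by levels      *)
(* 0,1,2,...; the variable introduced at level k is the nat k.         *)
(* An atom "of level k" is an atom whose arguments are among the       *)
(* variables 0..k and which mentions the newest variable k.            *)

Definition atomT m (ar : 'I_m -> nat) (n : nat) : finType :=
  {i : 'I_m & {ffun 'I_(ar i) -> 'I_n}}.

Definition is_new m (ar : 'I_m -> nat) (k : nat) (a : atomT ar k.+1) : bool :=
  [exists j, tagged a j == ord_max].

Definition newAtom m (ar : 'I_m -> nat) (k : nat) : finType :=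
  {a : atomT ar k.+1 | is_new a}.

Definition apart m (ar : 'I_m -> nat) (k : nat) : finType :=
  {ffun newAtom ar k -> bool}.

(* ct ar k d : attributive constituents of depth d describing the      *)
(* variable of level k (given the variables of levels < k):            *)
(*   depth 0   : an atomic part                                        *)
(*   depth d+1 : an atomic part and a set of depth-d constituents of   *)
(*               level k+1 (those realized by some value of the next   *)
(*               variable).                                            *)
Fixpoint ct m (ar : 'I_m -> nat) (k d : nat) {struct d} : finType :=
  match d with
  | 0 => apart ar k
  | d'.+1 => (apart ar k * {set ct ar k.+1 d'})%type
  end.

(* Delta^(d): constituents of depth d without free variables. *)
Definition constituent m (ar : 'I_m -> nat) (d : nat) : finType :=
  match d with
  | 0 => unit
  | d'.+1 => {set ct ar 0 d'}
  end.

Definition bigAnd m (ar : 'I_m -> nat) (s : seq (fform ar)) : fform ar :=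
  foldr (@FAnd m ar) FTop s.
Definition bigOr m (ar : 'I_m -> nat) (s : seq (fform ar)) : fform ar :=
  foldr (@FOr m ar) (FNeg FTop) s.

Definition atom_form m (ar : 'I_m -> nat) k (a : newAtom ar k) : fform ar :=
  @FAtom m ar (tag (val a)) [tuple val (tagged (val a) j) | j < ar (tag (val a))].

Definition apart_form m (ar : 'I_m -> nat) k (A : apart ar k) : fform ar :=
  bigAnd [seq (if A a then atom_form a else FNeg (atom_form a)) | a <- enum (newAtom ar k)].

Fixpoint ct_form m (ar : 'I_m -> nat) (k d : nat) {struct d} : ct ar k d -> fform ar :=
  match d return ct ar k d -> fform ar with
  | 0 => fun A => apart_form A
  | d'.+1 => fun p =>
      FAnd (apart_form p.1)
        (FAnd (bigAnd [seq FEx k.+1 (ct_form c) | c <- enum p.2])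
              (FAll k.+1 (bigOr [seq ct_form c | c <- enum p.2])))
  end.

Definition csent m (ar : 'I_m -> nat) (d : nat) : constituent ar d -> fform ar :=
  match d return constituent ar d -> fform ar with
  | 0 => fun _ => FTop
  | d'.+1 => fun G =>
      FAnd (bigAnd [seq FEx 0 (ct_form c) | c <- enum G])
           (FAll 0 (bigOr [seq ct_form c | c <- enum G]))
  end.

Fixpoint ct_trunc m (ar : 'I_m -> nat) (k d : nat) {struct d} :
    ct ar k d.+1 -> ct ar k d :=
  match d return ct ar k d.+1 -> ct ar k d with
  | 0 => fun p => p.1
  | d'.+1 => fun p => (p.1, [set ct_trunc x | x in p.2])
  end.

Definition reduct m (ar : 'I_m -> nat) (d : nat) :
    constituent ar d.+1 -> constituent ar d :=
  match d return constituent ar d.+1 -> constituent ar d with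
  | 0 => fun _ => tt
  | d'.+1 => fun G => [set ct_trunc x | x in G]
  end.

Definition expand1 m (ar : 'I_m -> nat) (d : nat) (delta : constituent ar d) :
    {set constituent ar d.+1} :=
  [set delta' | reduct delta' == delta].

(* A constituent is read as a finite "type tree"; a formula is          *)
(* evaluated on it by: Exists = some child, Forall = every child,       *)
(* atoms = the recorded atomic parts.  dnf(phi) is the set of depth-    *)
(* qdepth(phi) constituents on which phi evaluates to true.             *)

Inductive tree (m : nat) : Type :=
  Node : ('I_m -> seq nat -> bool) -> seq (tree m) -> tree m.

(* atomic part as a predicate on (symbol, argument levels) *)
Definition asg m (ar : 'I_m -> nat) k (A : apart ar k) (i : 'I_m) (s : seq nat) : bool :=
  [&& size s == ar i, all (fun n => n <= k) s &
      match insub (@existT 'I_m (fun i => {ffun 'I_(ar i) -> 'I_k.+1}) i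
                     [ffun j : 'I_(ar i) => inord (nth 0 s j)] : atomT ar k.+1)
      with Some a => A a | None => false end].

Fixpoint ct_tree m (ar : 'I_m -> nat) (k d : nat) {struct d} : ct ar k d -> tree m :=
  match d return ct ar k d -> tree m with
  | 0 => fun A => Node (asg A) [::]
  | d'.+1 => fun p => Node (asg p.1) [seq ct_tree c | c <- enum p.2]
  end.

Definition root_children m (ar : 'I_m -> nat) (d : nat) : constituent ar d -> seq (tree m) :=
  match d return constituent ar d -> seq (tree m) with
  | 0 => fun _ => [::]
  | d'.+1 => fun G => [seq ct_tree c | c <- enum G]
  end.

(* st: atomic parts of the nodes along the current path (index = level);
   env: level assigned to each bound variable; ch: current children. *)
Fixpoint ev m (ar : 'I_m -> nat) (st : seq ('I_m -> seq nat -> bool))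
    (env : nat -> option nat) (ch : seq (tree m)) (f : fform ar) : bool :=
  match f with
  | FTop => true
  | FAtom i args =>
      let ol := [seq env v | v <- tval args] in
      if all (fun o => o != None) ol then
        let ls := [seq odflt 0 o | o <- ol] in
        nth (fun _ _ => false) st (foldr maxn 0 ls) i ls
      else false
  | FNeg g => ~~ ev st env ch g
  | FAnd g h => ev st env ch g && ev st env ch h
  | FOr g h => ev st env ch g || ev st env ch h
  | FEx x g => has (fun t => let: Node A ch' := t in
        ev (rcons st A) (fun y => if y == x then Some (size st) else env y) ch' g) ch
  | FAll x g => all (fun t => let: Node A ch' := t in
        ev (rcons st A) (fun y => if y == x then Some (size st) else env y) ch' g) ch
  end.

Definition dnf m (ar : 'I_m -> nat) (phi : fform ar) : {set constituent ar (qdepth phi)} :=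
  [set delta | ev [::] (fun _ => None) (root_children delta) phi].

(* Refinement tree: the children of delta are expand1 delta (each       *)
(* depth-(d+1) constituent has exactly one reduct, hence one parent).   *)
Local Open Scope ring_scope.

Definition hintikka_tree (R : realType) m (ar : 'I_m -> nat)
    (H : forall d, constituent ar d -> R) : Prop :=
  [/\ (forall d (delta : constituent ar d), 0 <= H d delta <= 1),
      H 0 tt = 1 &
      forall d (delta : constituent ar d),
        H d delta = \sum_(delta' in expand1 delta) H d.+1 delta'].

(* beta([delta^(0) ... delta^(d)]) = H(delta^(d)) by definition of beta, *)
(* so B(phi) = sum over dnf(phi) of H.                                  *)
Definition belief (R : realType) m (ar : 'I_m -> nat)
    (H : forall d, constituent ar d -> R) (phi : fform ar) : R :=
  \sum_(delta in dnf phi) H (qdepth phi) delta.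

(* Main.v *)
Require Import Defs.
From HB Require Import structures.
From mathcomp Require Import all_boot all_order all_algebra.
From mathcomp Require Import reals.
From Stdlib Require List.
Import Order.TTheory GRing.Theory Num.Theory.
Set Implicit Arguments. Unset Strict Implicit. Unset Printing Implicit Defensive.

Lemma hasIn T (p : pred T) (s : seq T) : has p s <-> exists2 t, List.In t s & p t.
Proof.
elim: s => [|x s IH] /=; first by split => // [[]].
split.
- case/orP => [px|/IH [t ht pt]]; [by exists x; [left|]|by exists t; [right|]].
- case=> t [<-|ht] pt; apply/orP; [by left| right; apply/IH; by exists t].
Qed.

Lemma allIn T (p : pred T) (s : seq T) : all p s <-> forall t, List.In t s -> p t.
Proof.
elim: s => [|x s IH] /=; first by [].
split.
- case/andP => px /IH H t [<-|ht] //; exact: H.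
- move=> H; apply/andP; split; first by apply: H; left.
  apply/IH => t ht; apply: H; by right.
Qed.

Lemma memIn (T : eqType) (x : T) s : x \in s -> List.In x s.
Proof. elim: s => //= y s IH; rewrite inE => /orP [/eqP ->|/IH]; by [left|right]. Qed.

Lemma Inmem (T : eqType) (x : T) s : List.In x s -> x \in s.
Proof. elim: s => //= y s IH [->|/IH]; rewrite inE ?eqxx // => ->; by rewrite orbT. Qed.

Fixpoint chrel m (q : nat) (c1 c2 : seq (tree m)) {struct q} : Prop :=
  match q with
  | 0 => True
  | q'.+1 =>
    (forall t1, List.In t1 c1 -> exists2 t2, List.In t2 c2 &
        match t1, t2 with Node A1 ch1, Node A2 ch2 => A1 = A2 /\ chrel q' ch1 ch2 end) /\
    (forall t2, List.In t2 c2 -> exists2 t1, List.In t1 c1 &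
        match t1, t2 with Node A1 ch1, Node A2 ch2 => A1 = A2 /\ chrel q' ch1 ch2 end)
  end.

Definition nrel m q (t1 t2 : tree m) : Prop :=
  match t1, t2 with Node A1 ch1, Node A2 ch2 => A1 = A2 /\ chrel q ch1 ch2 end.

Lemma ev_bigAnd m (ar : 'I_m -> nat) st env ch (s : seq (fform ar)) :
  ev st env ch (bigAnd s) = all (ev st env ch) s.
Proof. by elim: s => //= f s ->. Qed.

Lemma ev_bigOr m (ar : 'I_m -> nat) st env ch (s : seq (fform ar)) :
  ev st env ch (bigOr s) = has (ev st env ch) s.
Proof. by elim: s => //= f s ->. Qed.

Lemma ev_chrel m (ar : 'I_m -> nat) (f : fform ar) : forall q st env c1 c2,
  (qdepth f <= q)%N -> chrel q c1 c2 -> ev st env c1 f = ev st env c2 f.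
Proof.
elim: f => [|i args|g IH|g IHg h IHh|g IHg h IHh|x g IH|x g IH] q st env c1 c2 /=;
  try done.
- by move=> hq hc; rewrite (IH q st env c1 c2).
- by rewrite geq_max => /andP [h1 h2] hc; rewrite (IHg q st env c1 c2) // (IHh q st env c1 c2).
- by rewrite geq_max => /andP [h1 h2] hc; rewrite (IHg q st env c1 c2) // (IHh q st env c1 c2).
- case: q => // q hq [hc1 hc2]; apply/idP/idP.
  + move/hasIn => [t1 i1 p1]; apply/hasIn.
    have [t2 i2 r] := hc1 t1 i1; exists t2 => //.
    clear i1 i2; move: p1 r; case: t1 => A1 ch1; case: t2 => A2 ch2 p1 [<- r].
    by rewrite -(IH q _ _ ch1 ch2).
  + move/hasIn => [t2 i2 p2]; apply/hasIn.
    have [t1 i1 r] := hc2 t2 i2; exists t1 => //.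
    clear i1 i2; move: p2 r; case: t1 => A1 ch1; case: t2 => A2 ch2 p2 [-> r].
    by rewrite (IH q _ _ ch1 ch2).
- case: q => // q hq [hc1 hc2]; apply/idP/idP.
  + move/allIn => H; apply/allIn => t2 i2.
    have [t1 i1 r] := hc2 t2 i2; have := H t1 i1.
    clear i1 i2; move: r; case: t1 => A1 ch1; case: t2 => A2 ch2 [-> r].
    by rewrite (IH q _ _ ch1 ch2).
  + move/allIn => H; apply/allIn => t1 i1.
    have [t2 i2 r] := hc1 t1 i1; have := H t2 i2.
    clear i1 i2; move: r; case: t1 => A1 ch1; case: t2 => A2 ch2 [<- r].
    by rewrite -(IH q _ _ ch1 ch2).
Qed.

Definition envgood (env : nat -> option nat) n := forall y, env y = if (y < n)%N then Some y else None.

Lemma foldr_max_eq k (s : seq nat) : all (fun n => n <= k)%N s -> k \in s -> foldr maxn 0%N s = k.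
Proof.
elim: s => //= x s IH /andP [hx hs]; rewrite inE => /orP [/eqP <-|hk].
- apply/eqP; rewrite eqn_leq leq_maxl andbT geq_max leqnn /=.
  elim: s hs {IH} => //= y s IH' /andP [hy hs]; by rewrite geq_max hy IH'.
- by rewrite IH //; apply/maxn_idPr.
Qed.

Lemma ev_atom m (ar : 'I_m -> nat) k st0 (A' : apart ar k) env (ch : seq (tree m)) (a : newAtom ar k) :
  size st0 = k -> envgood env k.+1 ->
  ev (rcons st0 (asg A')) env ch (atom_form a) = A' a.
Proof.
move=> hs he.
case: a => [[i f] hn] /=.
rewrite /atom_form /=.
have -> : tval [tuple val (f j) | j < ar i] = [seq val (f j) | j <- enum 'I_(ar i)] by [].
rewrite -map_comp.
have hlt : forall j, (val (f j) < k.+1)%N by move=> j; exact: ltn_ord.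
rewrite (eq_map (g := fun j => Some (val (f j)))); last by move=> j /=; rewrite he hlt.
rewrite all_map (@eq_all _ _ predT) ?all_predT; last by [].
rewrite (_ : [seq odflt 0%N o | o <- _] = [seq val (f j) | j <- enum 'I_(ar i)]); last by rewrite -map_comp.
set ls := [seq _ | _ <- _].
have hall : all (fun n => n <= k)%N ls by apply/allP => n /mapP [j _ ->]; rewrite -ltnS.
have hmax : foldr maxn 0%N ls = k.
  apply: foldr_max_eq => //.
  have [j /eqP hj] : exists j, f j == ord_max by apply/existsP.
  by apply/mapP; exists j; rewrite ?mem_enum // hj.
rewrite hmax nth_rcons hs ltnn eqxx /asg.
rewrite size_map size_enum_ord eqxx hall /=.
have -> : [ffun j : 'I_(ar i) => (inord (nth 0%N ls j) : 'I_k.+1)] = f.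
  apply/ffunP => j; rewrite ffunE /ls (nth_map j) ?size_enum_ord // nth_ord_enum.
  exact: inord_val.
by rewrite insubT.
Qed.

Lemma ev_neg m (ar : 'I_m -> nat) st env (ch : seq (tree m)) (f : fform ar) : ev st env ch (FNeg f) = ~~ ev st env ch f.
Proof. by []. Qed.

Lemma ev_all m (ar : 'I_m -> nat) st env (ch : seq (tree m)) x (g : fform ar) :
  ev st env ch (FAll x g) = all (fun t => let: Node A ch' := t in
        ev (rcons st A) (fun y => if y == x then Some (size st) else env y) ch' g) ch.
Proof. by []. Qed.

Lemma ev_ex m (ar : 'I_m -> nat) st env (ch : seq (tree m)) x (g : fform ar) :
  ev st env ch (FEx x g) = has (fun t => let: Node A ch' := t in
        ev (rcons st A) (fun y => if y == x then Some (size st) else env y) ch' g) ch.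
Proof. by []. Qed.

Lemma ev_apart m (ar : 'I_m -> nat) k st0 (A0 A : apart ar k) env (ch : seq (tree m)) :
  size st0 = k -> envgood env k.+1 ->
  ev (rcons st0 (asg A0)) env ch (apart_form A) -> A0 = A.
Proof.
move=> hs he; rewrite /apart_form ev_bigAnd all_map => /allP H.
apply/ffunP => a; have := H a (mem_enum _ a) => /=.
case: (A a) => h; cbv iota in h; [by rewrite (ev_atom _ _ _ hs he) in h | by move: h; rewrite ev_neg (ev_atom _ _ _ hs he) => /negbTE].
Qed.

Definition wf m (ar : 'I_m -> nat) k (t : tree m) := exists D (s : ct ar k D), t = ct_tree s.

Lemma InMap (T U : Type) (f : T -> U) x s : List.In x s -> List.In (f x) (map f s).
Proof. elim: s => //= y s IH [->|/IH]; by [left|right]. Qed.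

Lemma InMapInv (T U : Type) (f : T -> U) y s : List.In y (map f s) -> exists2 x, List.In x s & y = f x.
Proof.
elim: s => //= x s IH [<-|/IH [z hz ->]]; first by exists x; [left|].
by exists z; [right|].
Qed.

Lemma wf_node m (ar : 'I_m -> nat) k t : wf ar k t ->
  exists A0 : apart ar k, exists ch, t = Node (asg A0) ch /\ forall t', List.In t' ch -> wf ar k.+1 t'.
Proof.
case=> D [s ->]; case: D s => [|D] s.
- by exists s, [::].
- exists s.1, [seq ct_tree c | c <- enum s.2]; split => // t' hin.
  have [c _ ->] := InMapInv hin; by exists D, c.
Qed.

Lemma envgood_ext (T : Type) env k (st : seq T) : envgood env k -> size st = k ->
  envgood (fun y => if y == k then Some (size st) else env y) k.+1.
Proof.
move=> he hs y; rewrite he hs ltnS (leq_eqVlt y k).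
by case: (y =P k) => [->|].
Qed.

Definition keyP m (ar : 'I_m -> nat) d := forall k (c : ct ar k d) st0 env (A0 : apart ar k) ch',
  size st0 = k -> envgood env k.+1 -> (forall t, List.In t ch' -> wf ar k.+1 t) ->
  ev (rcons st0 (asg A0)) env ch' (ct_form c) -> nrel d (Node (asg A0) ch') (ct_tree c).

Lemma key_children m (ar : 'I_m -> nat) d (IH : keyP ar d) k (S : {set ct ar k d}) st env ch' :
  size st = k -> envgood env k -> (forall t, List.In t ch' -> wf ar k t) ->
  ev st env ch' (bigAnd [seq FEx k (ct_form c) | c <- enum S]) ->
  ev st env ch' (FAll k (bigOr [seq ct_form c | c <- enum S])) ->
  chrel d.+1 ch' [seq ct_tree c | c <- enum S].
Proof.
move=> hs he hw hex hall /=; split.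
- move=> t1 i1; have [A1 [ch1 [E1 hw1]]] := wf_node (hw t1 i1).
  rewrite ev_all in hall; move/allIn: hall => /(_ _ i1); rewrite E1 ev_bigOr has_map => /hasIn [c ic hf].
  exists (ct_tree c); first exact: InMap.
  apply: (IH _ _ _ _ _ _ _ _ hw1 hf); first exact: hs.
  exact: envgood_ext.
- move=> t2 hin; have [c ic ->] := InMapInv hin.
  move: hex; rewrite ev_bigAnd all_map => /allIn /(_ _ ic) hx.
  have : ev st env ch' (FEx k (ct_form c)) := hx.
  rewrite ev_ex => /hasIn [t1 i1].
  have [A1 [ch1 [E1 hw1]]] := wf_node (hw t1 i1); rewrite E1 => hf.
  exists (Node (asg A1) ch1); first by rewrite -E1.
  apply: (IH _ _ _ _ _ _ _ _ hw1 hf); first exact: hs.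
  exact: envgood_ext.
Qed.

Lemma key m (ar : 'I_m -> nat) d : keyP ar d.
Proof.
elim: d => [|d IH] k c st0 env A0 ch' hs he hw /=.
- by move/ev_apart => -> //.
- case: c => A S /= /andP [ha /andP [hex hall]].
  have E := ev_apart hs he ha; split; first by rewrite E.
  apply: (@key_children m ar d IH k.+1 S (rcons st0 (asg A0)) env ch') => //.
  by rewrite size_rcons hs.
Qed.

Lemma chrel_map_trunc m (ar : 'I_m -> nat) d k (S : {set ct ar k d.+1})
  (IH : forall c : ct ar k d.+1, nrel d (ct_tree c) (ct_tree (ct_trunc c))) :
  chrel d.+1 [seq ct_tree c | c <- enum S] [seq ct_tree c | c <- enum [set ct_trunc x | x in S]].
Proof.
split.
- move=> t1 hin; have [c ic ->] := InMapInv hin.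
  exists (ct_tree (ct_trunc c)); last exact: IH.
  apply: InMap; apply: memIn; rewrite mem_enum; apply: imset_f.
  by move/Inmem: ic; rewrite mem_enum.
- move=> t2 hin; have [y iy ->] := InMapInv hin.
  move/Inmem: iy; rewrite mem_enum => /imsetP [x xS ->].
  exists (ct_tree x); last exact: IH.
  by apply: InMap; apply: memIn; rewrite mem_enum.
Qed.

Lemma nrel_trunc m (ar : 'I_m -> nat) d : forall k (c : ct ar k d.+1),
  nrel d (ct_tree c) (ct_tree (ct_trunc c)).
Proof.
elim: d => [|d IHd] k c.
- by case: c.
- case: c => A S /=; split => //; exact: chrel_map_trunc (IHd k.+1).
Qed.

Lemma red_ev m (ar : 'I_m -> nat) d (delta' : constituent ar d.+1) (phi : fform ar) :
  (qdepth phi <= d)%N ->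
  ev [::] (fun _ => None) (root_children delta') phi =
  ev [::] (fun _ => None) (root_children (reduct delta')) phi.
Proof.
move=> hq; apply: (@ev_chrel m ar phi d _ _ _ _ hq).
case: d delta' {hq} => [|d] delta' //=.
exact: chrel_map_trunc (@nrel_trunc m ar d 0).
Qed.

Lemma csent_rel m (ar : 'I_m -> nat) d (delta : constituent ar d.+1) D (delta' : constituent ar D) :
  ev [::] (fun _ => None) (root_children delta') (csent delta) ->
  chrel d.+1 (root_children delta') (root_children delta).
Proof.
rewrite /= => /andP [hex hall].
apply: (@key_children m ar d (@key m ar d) 0 delta [::] (fun _ => None)) => //.
case: D delta' {hex hall} => [|D] delta' t //= hin.
have [c _ ->] := InMapInv hin; by exists D, c.
Qed.

Lemma ev_all_ex m (ar : 'I_m -> nat) st env (ch : seq (tree m)) x (g : fform ar) :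
  ev st env ch (FAll x g) = ~~ ev st env ch (FEx x (FNeg g)).
Proof.
rewrite ev_all ev_ex; elim: ch => //= [[A c] s ->].
by rewrite negb_or negbK.
Qed.

Local Open Scope ring_scope.

Definition Sb (R : realType) m (ar : 'I_m -> nat) (H : forall d, constituent ar d -> R)
  (phi : fform ar) d : R :=
  \sum_(delta : constituent ar d | ev [::] (fun _ => None) (root_children delta) phi) H d delta.

Lemma total (R : realType) m (ar : 'I_m -> nat) (H : forall d, constituent ar d -> R) :
  hintikka_tree H -> forall d, \sum_(delta : constituent ar d) H d delta = 1.
Proof.
case=> _ h0 hs; elim=> [|d IH].
- by rewrite (big_pred1 tt) //; case.
- rewrite (partition_big (@reduct m ar d) predT) //= -IH.
  apply: eq_bigr => delta _; rewrite hs; apply: eq_bigl => delta'.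
  by rewrite inE.
Qed.

Lemma S_step (R : realType) m (ar : 'I_m -> nat) (H : forall d, constituent ar d -> R) phi d :
  hintikka_tree H -> (qdepth phi <= d)%N -> Sb H phi d.+1 = Sb H phi d.
Proof.
case=> _ h0 hs hq; rewrite /Sb (partition_big (@reduct m ar d) predT) //=.
rewrite [RHS]big_mkcond; apply: eq_bigr => delta _.
case E: (ev _ _ _ phi).
- rewrite hs; apply: eq_bigl => delta'; rewrite inE.
  case hr: (reduct delta' == delta); last by rewrite andbF.
  by rewrite andbT red_ev // (eqP hr) E.
- apply: big1 => delta' /andP [hev /eqP hr].
  by move: hev; rewrite red_ev // hr E.
Qed.

Lemma S_B (R : realType) m (ar : 'I_m -> nat) (H : forall d, constituent ar d -> R) phi :
  hintikka_tree H -> forall d, (qdepth phi <= d)%N -> Sb H phi d = belief H phi.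
Proof.
move=> hH; elim=> [|d IH].
- rewrite leqn0 => /eqP hq.
  have -> : Sb H phi 0 = Sb H phi (qdepth phi) by rewrite hq.
  by apply: eq_bigl => delta; rewrite inE.
- rewrite leq_eqVlt => /orP [/eqP hq|hq].
  + have -> : Sb H phi d.+1 = Sb H phi (qdepth phi) by rewrite hq.
    by apply: eq_bigl => delta; rewrite inE.
  + by rewrite S_step // IH.
Qed.

Lemma Sb_mono (R : realType) m (ar : 'I_m -> nat) (H : forall d, constituent ar d -> R) f g d :
  hintikka_tree H ->
  (forall delta : constituent ar d, ev [::] (fun _ => None) (root_children delta) f ->
                ev [::] (fun _ => None) (root_children delta) g) ->
  Sb H f d <= Sb H g d.
Proof.
case=> hb _ _ himp; rewrite /Sb big_mkcond [X in _ <= X]big_mkcond /=.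
apply: ler_sum => delta _.
case E: (ev _ _ _ f); first by rewrite himp.
by case: (ev _ _ _ g) => //; case/andP: (hb d delta).
Qed.

Lemma Sb_disj (R : realType) m (ar : 'I_m -> nat) (H : forall d, constituent ar d -> R) f g d :
  hintikka_tree H ->
  (forall delta : constituent ar d, ev [::] (fun _ => None) (root_children delta) f ->
                ev [::] (fun _ => None) (root_children delta) g -> False) ->
  Sb H f d + Sb H g d <= 1.
Proof.
move=> hH himp; rewrite -(total hH d) /Sb big_mkcond [X in _ + X]big_mkcond -big_split /=.
apply: ler_sum => delta _; case: hH => hb _ _.
have [h0 _] := andP (hb d delta).
case E: (ev _ _ _ f); case F: (ev _ _ _ g) => //.
- by exfalso; exact: himp E F.
- by rewrite addr0.
- by rewrite add0r.
- by rewrite addr0.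
Qed.

Lemma S_neg (R : realType) m (ar : 'I_m -> nat) (H : forall d, constituent ar d -> R) f d :
  hintikka_tree H -> Sb H (FNeg f) d = 1 - Sb H f d.
Proof.
move=> hH; rewrite -(total hH d) (bigID (fun delta : constituent ar d =>
   ev [::] (fun _ => None) (root_children delta) f)) /=.
by rewrite /Sb addrC addrK.
Qed.

Unset Implicit Arguments.
Local Open Scope ring_scope.

Theorem mainTheorem6 (R : realType) (m : nat) (ar : 'I_m -> nat)
  (ar_pos : forall i, (0 < ar i)%N)
  (H : forall d, constituent ar d -> R) :
  hintikka_tree H ->
  let B := belief H in
  forall (phi phi1 phi2 : fform ar) (x : nat) (psi : fform ar),
    sentence phi -> sentence phi1 -> sentence phi2 ->
    {subset fv psi <= [:: x]} ->
    [/\ B (FNeg phi) = 1 - B phi,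
        B (FAnd phi1 phi2) <= Num.min (B phi1) (B phi2),
        Num.max (B phi1) (B phi2) <= B (FOr phi1 phi2),
        (forall delta, delta \in dnf (FEx x (FNeg psi)) ->
           B (FAll x psi) <= 1 - B (csent delta)) &
        (forall delta, delta \in dnf (FEx x psi) ->
           B (csent delta) <= B (FEx x psi))].
Proof.
move=> hH B phi phi1 phi2 x psi _ _ _ _; rewrite /B.
split.
- rewrite -(S_B hH (leqnn (qdepth (FNeg phi)))) -(S_B hH (leqnn (qdepth phi))).
  exact: S_neg.
- set D := qdepth (FAnd phi1 phi2).
  rewrite -(S_B hH (leqnn D)) -(S_B hH (d := D) (leq_maxl _ _)) -(S_B hH (d := D) (leq_maxr _ _)).
  by rewrite le_min; apply/andP; split; apply: Sb_mono => // delta /= /andP [].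
- set D := qdepth (FOr phi1 phi2).
  rewrite -(S_B hH (leqnn D)) -(S_B hH (d := D) (leq_maxl _ _)) -(S_B hH (d := D) (leq_maxr _ _)).
  by rewrite ge_max; apply/andP; split; apply: Sb_mono => // delta /= ->; rewrite ?orbT.
- move=> delta hd.
  set D := maxn (qdepth psi).+1 (qdepth (csent delta)).
  rewrite -(@S_B R m ar H (FAll x psi) hH D (leq_maxl _ _)) -(@S_B R m ar H (csent delta) hH D (leq_maxr _ _)).
  suff hdisj : Sb H (FAll x psi) D + Sb H (csent delta) D <= 1.
    by rewrite lerBrDr.
  apply: Sb_disj => // delta' ha hc.
  have hr := csent_rel hc.
  move: ha; rewrite (@ev_chrel m ar (FAll x psi) (qdepth psi).+1 _ _ _ _ (leqnn _) hr).
  by rewrite ev_all_ex; move: hd; rewrite inE => ->.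
- move=> delta hd.
  set D := maxn (qdepth psi).+1 (qdepth (csent delta)).
  rewrite -(@S_B R m ar H (FEx x psi) hH D (leq_maxl _ _)) -(@S_B R m ar H (csent delta) hH D (leq_maxr _ _)).
  apply: Sb_mono => // delta' hc.
  have hr := csent_rel hc.
  rewrite (@ev_chrel m ar (FEx x psi) (qdepth psi).+1 _ _ _ _ (leqnn _) hr).
  by move: hd; rewrite inE.
Qed.
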